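(* Let $X:\mathbb{N}\to\mathbf{Set}_*$ be a tower of pointed sets, $A$ an abelian group, $m\ge2$ an integer, $h\in G(X,A)$, and $x_1,\dots,x_l\in\lim_\mathbb{N}X$. Suppose that for every $n\in\mathbb{N}$ and every $a\in\mathrm{supp}(h(n))\setminus\{x_1(n),\dots,x_l(n)\}$ we have $h(n)_a\in mA$. Then $[h]\in mH(X,A)$.
   Context: $\mathbb{N}$ is regarded as a category with a single morphism $n\to m$ whenever $n\ge m$. For a pointed set $Y$, $Y\wedge A:=\bigoplus_{Y\setminus\{*\}}A$, whose elements are finitely supported pointed maps $y:Y\to A$, $s\mapsto y_s$, with $\mathrm{supp}(y)=\{s:y_s\ne0\}$; functorial via $f_*(sv)=f(s)v$, where $sv$ is the element with value $v$ at $s$ ($*v=0$). $G(X,A):=\lim_\mathbb{N}(X\wedge A)$; $K(X,A)$ is the image of the injective natural map $\rho:(\lim_\mathbb{N}X)\wedge A\to G(X,A)$, $\rho(xv)(n)=x(n)v$; $H(X,A):=G(X,A)/K(X,A)$, and $[h]$ denotes the class of $h\in G(X,A)$ in $H(X,A)$. *)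

(* Defs.v *)
From HB Require Import structures.
From mathcomp Require Import all_boot all_algebra.
Set Implicit Arguments. Unset Strict Implicit. Unset Printing Implicit Defensive.
Import GRing.Theory.
Local Open Scope ring_scope.

(* The carriers are eqTypes (classically every set has
   decidable equality). *)
Record tower := Tower {
  obj :> nat -> eqType;
  pt : forall n, obj n;
  bond : forall n, obj n.+1 -> obj n;
  bond_pt : forall n, bond (pt n.+1) = pt n }.

(* y is an element of Y /\ A : a pointed map Y -> A with finite support. *)
Definition smash (T : eqType) (p : T) (A : zmodType) (y : T -> A) : Prop :=
  y p = 0 /\ exists s : seq T, forall a, y a != 0 -> a \in s.

Definition covers (T : eqType) (A : zmodType) (y : T -> A) (s : seq T) : Prop :=
  uniq s /\ forall a, y a != 0 -> a \in s.

(* z = f_* y, where f_*(s v) = f(s) v and * v = 0 *)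
Definition is_push (S T : eqType) (pT : T) (A : zmodType) (f : S -> T)
  (y : S -> A) (z : T -> A) : Prop :=
  z pT = 0 /\
  forall t, t != pT -> forall s, covers y s -> z t = \sum_(a <- s | f a == t) y a.

(* h \in G(X,A) = lim_N (X /\ A) *)
Definition inG (X : tower) (A : zmodType) (h : forall n, X n -> A) : Prop :=
  (forall n, smash (pt X n) (h n)) /\
  (forall n, is_push (pt X n) (@bond X n) (h n.+1) (h n)).

Definition thread (X : tower) :=
  {x : forall n, X n | forall n, @bond X n (x n.+1) = x n}.

(* h \in K(X,A) = image of rho : (lim X) /\ A -> G(X,A):
   h = rho (sum_i x_i v_i), i.e. h(n) = sum_i x_i(n) v_i. *)
Definition inK (X : tower) (A : zmodType) (h : forall n, X n -> A) : Prop :=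
  exists xs : seq (thread X * A),
    forall n, h n (pt X n) = 0 /\
      forall t, t != pt X n -> h n t = \sum_(p <- xs | sval p.1 n == t) p.2.

(* [h] \in m H(X,A): h - m g \in K(X,A) for some g \in G(X,A) *)
Definition in_mH (X : tower) (A : zmodType) (m : nat) (h : forall n, X n -> A) : Prop :=
  exists g : forall n, X n -> A, inG g /\ inK (fun n a => h n a - g n a *+ m).

(* Main.v *)
Require Import Defs.
From mathcomp Require Import all_boot all_algebra.
From Stdlib Require Import ClassicalEpsilon Classical.
Set Implicit Arguments. Unset Strict Implicit. Unset Printing Implicit Defensive.
Import GRing.Theory.
Local Open Scope ring_scope.

Definition mult (A : zmodType) (m : nat) (v : A) := exists b : A, v = b *+ m.

Lemma mult0 (A : zmodType) m : mult m (0 : A).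
Proof. by exists 0; rewrite mul0rn. Qed.
Lemma multD (A : zmodType) m (u v : A) : mult m u -> mult m v -> mult m (u + v).
Proof. by move=> [a ->] [b ->]; exists (a + b); rewrite mulrnDl. Qed.
Lemma multN (A : zmodType) m (u : A) : mult m u -> mult m (- u).
Proof. by move=> [a ->]; exists (- a); rewrite mulNrn. Qed.
Lemma multB (A : zmodType) m (u v : A) : mult m u -> mult m v -> mult m (u - v).
Proof. by move=> mu mv; apply: multD => //; apply: multN. Qed.
Lemma mult_sum (A : zmodType) m (I : Type) (r : seq I) (P : pred I) (F : I -> A) :
  (forall i, P i -> mult m (F i)) -> mult m (\sum_(i <- r | P i) F i).
Proof. by move=> H; apply: big_ind => //; [apply: mult0 | apply: multD]. Qed.

Lemma sum_nz (T : eqType) (A : zmodType) (y : T -> A) (P : pred T) (s : seq T) :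
  \sum_(a <- s | P a) y a = \sum_(a <- [seq a <- s | y a != 0] | P a) y a.
Proof.
rewrite big_filter_cond [RHS]big_mkcond [LHS]big_mkcond; apply: eq_bigr => a _.
by case: (P a); case: eqP => // ->; rewrite ?andbF.
Qed.

Lemma cover_sum (T : eqType) (A : zmodType) (y : T -> A) (P : pred T) (s1 s2 : seq T) :
  covers y s1 -> covers y s2 ->
  \sum_(a <- s1 | P a) y a = \sum_(a <- s2 | P a) y a.
Proof.
move=> [u1 c1] [u2 c2]; rewrite sum_nz [RHS]sum_nz; apply: perm_big.
apply: uniq_perm; rewrite ?filter_uniq // => a; rewrite !mem_filter.
by case: (boolP (y a != 0)) => //= H; rewrite (c1 _ H) (c2 _ H).
Qed.

Lemma sumD1 (T : eqType) (A : zmodType) (F : T -> A) (P : pred T) (s : seq T) j :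
  uniq s -> j \in s -> P j ->
  \sum_(a <- s | P a) F a = F j + \sum_(a <- s | P a && (a != j)) F a.
Proof.
move=> u js Pj; rewrite big_mkcond (bigD1_seq j) //= Pj; congr (_ + _).
rewrite [RHS]big_mkcond [LHS]big_mkcond; apply: eq_bigr => a _.
by case: (a != j); rewrite ?andbT ?andbF.
Qed.

Lemma sumB' (T : Type) (A : zmodType) (F G : T -> A) (P : pred T) (s : seq T) :
  \sum_(a <- s | P a) (F a - G a) = \sum_(a <- s | P a) F a - \sum_(a <- s | P a) G a.
Proof. by rewrite big_split /= sumrN. Qed.

Lemma cover_ex (X : tower) (A : zmodType) n (y : X n -> A) :
  smash (pt X n) y -> exists s, covers y s.
Proof.
move=> [_ [s Hs]]; exists (undup s); split; first exact: undup_uniq.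
by move=> a /Hs; rewrite mem_undup.
Qed.

Lemma G_sub (X : tower) (A : zmodType) (h e : forall n, X n -> A) :
  inG h -> inG e -> inG (fun n t => h n t - e n t).
Proof.
move=> [hs hp] [es ep]; split.
  move=> n; have [h0 [s1 H1]] := hs n; have [e0 [s2 H2]] := es n.
  split; first by rewrite h0 e0 subr0.
  exists (s1 ++ s2) => a; rewrite mem_cat.
  case: (boolP (h n a != 0)) => [/H1 -> //|]; rewrite negbK => /eqP ->.
  by rewrite sub0r oppr_eq0 => /H2 ->; rewrite orbT.
move=> n; split; first by rewrite (proj1 (hp n)) (proj1 (ep n)) subr0.
move=> t tn s cs.
have [_ [s1 H1]] := hs n.+1; have [_ [s2 H2]] := es n.+1.
pose u := undup (s ++ s1 ++ s2).
have uu : uniq u by exact: undup_uniq.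
have inu : forall a, a \in s1 ++ s2 -> a \in u by move=> a H; rewrite mem_undup mem_cat H orbT.
rewrite (cover_sum _ cs (s2 := u)); last first.
  by split=> // a /(proj2 cs); rewrite mem_undup mem_cat => ->.
rewrite sumB' (proj2 (hp n) t tn u) ?(proj2 (ep n) t tn u) //.
  by split=> // a /H2 H; apply: inu; rewrite mem_cat H orbT.
by split=> // a /H1 H; apply: inu; rewrite mem_cat H.
Qed.

Definition tel (X : tower) (A : zmodType) (x : thread X) (c : A) : forall n, X n -> A :=
  fun n t => if (t != pt X n) && (t == sval x n) then c else 0.
Arguments tel {X A} x c n t.

Lemma G_tel (X : tower) (A : zmodType) (x : thread X) (c : A) : inG (tel x c).
Proof.
have cov1 : forall n : nat, covers (tel x c n) [:: sval x n].
  move=> n; split=> // a; rewrite /tel inE.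
  case: ((a != pt X n) && (a == sval x n)) /andP => [[_ /eqP -> _]|]; first by rewrite eqxx.
  by rewrite eqxx.
split.
  move=> n; split; first by rewrite /tel eqxx.
  by exists [:: sval x n]; apply: (proj2 (cov1 n)).
move=> n; split; first by rewrite /tel eqxx.
move=> t tn s cs.
rewrite (cover_sum _ cs (cov1 n.+1)).
rewrite big_cons big_nil (svalP x n) /tel tn /=.
rewrite eqxx andbT addr0.
case: (boolP (t == sval x n)) => [/eqP Et|ne]; last by rewrite eq_sym (negbTE ne).
rewrite Et eqxx; case: eqP => // xp.
by move: tn; rewrite Et -(svalP x n) xp bond_pt eqxx.
Qed.

Definition rep (X : tower) (A : zmodType) (k : forall n, X n -> A)
  (cov : forall n, seq (X n)) (n : nat) (t : X n) : X n.+1 :=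
  nth (pt X n.+1) (cov n.+1)
    (find (fun a => (@bond X n a == t) && (k n.+1 a != 0)) (cov n.+1)).

Fixpoint gfix (X : tower) (A : zmodType) (k : forall n, X n -> A)
  (cov : forall n, seq (X n)) (D : forall n, X n -> A) (n : nat) : X n -> A :=
  match n return X n -> A with
  | 0%N => D 0%N
  | n'.+1 => fun a =>
     if k n'.+1 a == 0 then 0 else
     if (@bond X n' a != pt X n') && (a == rep k cov (@bond X n' a))
     then gfix k cov D (@bond X n' a)
          - \sum_(a' <- cov n'.+1 | (@bond X n' a' == @bond X n' a) && (a' != a)) D n'.+1 a'
     else D n'.+1 a
  end.

Lemma base_lemma (X : tower) (A : zmodType) (m : nat) (k : forall n, X n -> A) :
  inG k -> (forall n a, k n a != 0 -> mult m (k n a)) ->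
  exists g, inG g /\ forall n a, k n a = g n a *+ m.
Proof.
move=> [ks kp] km.
have cov_ex : forall n, {s : seq (X n) | covers (k n) s}.
  by move=> n; apply: constructive_indefinite_description; apply: cover_ex.
pose cov n := sval (cov_ex n).
have covP : forall n, covers (k n) (cov n) by move=> n; exact: (svalP (cov_ex n)).
have D_ex : forall n (a : X n), {b : A | k n a = b *+ m /\ (k n a == 0 -> b = 0)}.
  move=> n a; apply: constructive_indefinite_description.
  case: (boolP (k n a == 0)) => [/eqP ->|/km [b Hb]]; first by exists 0; rewrite mul0rn.
  by exists b; split.
pose D n a := sval (D_ex n a).
have DP : forall n a, k n a = D n a *+ m by move=> n a; exact: (proj1 (svalP (D_ex n a))).
have D0 : forall n a, k n a == 0 -> D n a = 0 by move=> n a; exact: (proj2 (svalP (D_ex n a))).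
pose g := gfix k cov D.
have gsupp : forall n a, g n a != 0 -> k n a != 0.
  case=> [|n] a; rewrite /g /=; last first.
  by case: (k n.+1 a =P 0) => [_|] //=; rewrite eqxx.
  move=> H; apply/negP => /D0 E; by move: H; rewrite E eqxx.
have kpt : forall n, k n (pt X n) = 0 by move=> n; exact: (proj1 (ks n)).
have gcov : forall n, covers (g n) (cov n).
  move=> n; split; first exact: (proj1 (covP n)).
  by move=> b Hb; apply: (proj2 (covP n)); apply: gsupp.
have gP : forall n a, k n a = g n a *+ m.
  elim=> [|n IH] a; first exact: DP.
  rewrite /g /=; case: eqP => [->|kn0]; first by rewrite mul0rn.
  case: ifP => [/andP[tn /eqP ar]|_]; last exact: DP.
  rewrite -/g mulrnBl -IH.
  have ac : a \in cov n.+1 by apply: (proj2 (covP n.+1)); apply/eqP.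
  rewrite (proj2 (kp n) _ tn _ (covP n.+1)) (sumD1 (j := a) _ (proj1 (covP n.+1)) ac) ?eqxx //.
  by rewrite -sumrMnl -(eq_bigr _ (fun i _ => DP n.+1 i)) addrK.
have gpt : forall n, g n (pt X n) = 0.
  move=> n; apply/eqP; apply: contraT => /gsupp; by rewrite kpt eqxx.
exists g; split=> //; split.
  by move=> n; split; [exact: gpt | exists (cov n); exact: (proj2 (gcov n))].
move=> n; split; first exact: gpt.
move=> t tn s cs; rewrite (cover_sum _ cs (gcov n.+1)).
have gn : forall a, g n.+1 a = if k n.+1 a == 0 then 0 else
     if (@bond X n a != pt X n) && (a == rep k cov (@bond X n a))
     then g n (@bond X n a)
          - \sum_(a' <- cov n.+1 | (@bond X n a' == @bond X n a) && (a' != a)) D n.+1 a'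
     else D n.+1 a by [].
case: (boolP (has (fun a => (@bond X n a == t) && (k n.+1 a != 0)) (cov n.+1))) => hh.
  have := nth_find (pt X n.+1) hh; rewrite -/(rep k cov t) => /andP[/eqP br kr].
  have rc : rep k cov t \in cov n.+1 by apply: mem_nth; rewrite -has_find.
  rewrite (sumD1 (j := rep k cov t) _ (proj1 (covP n.+1)) rc) ?br ?eqxx //.
  rewrite {1}gn (negbTE kr) br tn eqxx /=.
  have E : \sum_(a <- cov n.+1 | (@bond X n a == t) && (a != rep k cov t)) g n.+1 a
        = \sum_(a <- cov n.+1 | (@bond X n a == t) && (a != rep k cov t)) D n.+1 a.
    apply: eq_bigr => a /andP[/eqP ba ar]; rewrite gn ba (negbTE ar) andbF.
    by case: ifP => // /D0 ->.
  by rewrite E subrK.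
have k0 : forall a, a \in cov n.+1 -> @bond X n a == t -> k n.+1 a = 0.
  move=> a ac ba; move/hasPn: hh => /(_ a ac); rewrite ba /= negbK.
  by move/eqP.
have Z : forall a, a \in cov n.+1 -> @bond X n a == t -> g n.+1 a = 0.
  move=> a ac ba; apply/eqP; apply: contraT => /gsupp; by rewrite k0 ?eqxx.
rewrite big1_seq; last by move=> a /andP[ba ac]; apply: Z.
apply/eqP; apply: contraT => /gsupp; rewrite (proj2 (kp n) t tn _ (covP n.+1)).
by rewrite big1_seq ?eqxx // => a /andP[ba ac]; apply: k0.
Qed.

Lemma th_down (X : tower) (x y : thread X) j d :
  sval y (j + d)%N = sval x (j + d)%N -> sval y j = sval x j.
Proof.
elim: d => [|d IH]; first by rewrite addn0.
rewrite addnS => H; apply: IH.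
by rewrite -(svalP y (j + d)%N) -(svalP x (j + d)%N) H.
Qed.

Lemma th_le (X : tower) (x y : thread X) i n :
  (i <= n)%N -> sval y n = sval x n -> sval y i = sval x i.
Proof. by move=> le; rewrite -(subnKC le); apply: th_down. Qed.

Lemma th_down_pt (X : tower) (x : thread X) j d :
  sval x (j + d)%N = pt X (j + d)%N -> sval x j = pt X j.
Proof.
elim: d => [|d IH]; first by rewrite addn0.
rewrite addnS => H; apply: IH.
by rewrite -(svalP x (j + d)%N) H bond_pt.
Qed.

Lemma th_le_pt (X : tower) (x : thread X) i n :
  (i <= n)%N -> sval x n = pt X n -> sval x i = pt X i.
Proof. by move=> le; rewrite -(subnKC le); apply: th_down_pt. Qed.

Lemma allIn (T : Type) (p : pred T) (s : seq T) y : all p s -> List.In y s -> p y.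
Proof. by elim: s => //= z s IH /andP[pz ps] [<-|/IH]; auto. Qed.

Lemma Inall (T : Type) (p : pred T) (s : seq T) : (forall y, List.In y s -> p y) -> all p s.
Proof. elim: s => //= z s IH H; rewrite H /=; [apply: IH => y yin; apply: H| ]; auto. Qed.

Lemma exN (X : tower) (x : thread X) (l : seq (thread X)) :
  (forall y, List.In y l -> exists n, sval y n <> sval x n) ->
  exists N, forall y, List.In y l -> forall n, (N <= n)%N -> sval y n <> sval x n.
Proof.
elim: l => [|y l IH] H; first by exists 0%N.
have [ny Hy] := H y (or_introl erefl).
have [N HN] : exists N, forall y, List.In y l -> forall n, (N <= n)%N -> sval y n <> sval x n.
  by apply: IH => z zl; apply: H; right.
exists (maxn ny N) => z [<-|zl] n le.
  by move=> E; apply: Hy; apply: (th_le _ E); apply: leq_trans le; apply: leq_maxl.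
by apply: HN => //; apply: leq_trans le; apply: leq_maxr.
Qed.

Lemma chain (X : tower) (A : zmodType) m (h : forall n, X n -> A) (x : thread X) M :
  (forall j, (M <= j)%N -> mult m (h j.+1 (sval x j.+1) - h j (sval x j))) ->
  forall j, (M <= j)%N -> mult m (h j (sval x j) - h M (sval x M)).
Proof.
move=> P; elim=> [|j IH] le.
  by move: le P; rewrite leqn0 => /eqP -> _; rewrite subrr; apply: mult0.
move: le; rewrite leq_eqVlt => /orP[/eqP <-|lt]; first by rewrite subrr; apply: mult0.
have -> : h j.+1 (sval x j.+1) - h M (sval x M)
   = (h j.+1 (sval x j.+1) - h j (sval x j)) + (h j (sval x j) - h M (sval x M)).
  by rewrite addrA subrK.
by apply: multD; [apply: P | apply: IH].
Qed.

Definition hypP (X : tower) (A : zmodType) (m : nat) (h : forall n, X n -> A)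
  (xs : seq (thread X)) := forall n (a : X n), h n a != 0 ->
           all (fun x : thread X => a != sval x n) xs ->
           exists b : A, h n a = b *+ m.

Lemma step_lemma (X : tower) (A : zmodType) (m : nat) (h : forall n, X n -> A)
  (x : thread X) (xs : seq (thread X)) j :
  inG h -> hypP m h (x :: xs) -> sval x j != pt X j ->
  all (fun y : thread X => sval x j != sval y j) xs ->
  mult m (h j.+1 (sval x j.+1) - h j (sval x j)).
Proof.
move=> [hs hp] hyp xp allx.
have [s cs] := cover_ex (hs j.+1).
pose u := undup (sval x j.+1 :: s).
have cu : covers (h j.+1) u.
  by split; [exact: undup_uniq | move=> a /(proj2 cs) H; rewrite mem_undup inE H orbT].
have xu : sval x j.+1 \in u by rewrite mem_undup mem_head.
rewrite (proj2 (hp j) _ xp u cu) (sumD1 (j := sval x j.+1) _ (proj1 cu) xu); last first.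
  by rewrite (svalP x j).
rewrite opprD addrA subrr add0r; apply: multN; apply: mult_sum => a /andP[/eqP ba ax].
case: (boolP (h j.+1 a == 0)) => [/eqP ->|nz]; first exact: mult0.
apply: (hyp j.+1 a nz) => /=; rewrite ax /=; apply: Inall => y yin; apply/eqP => ay.
by have := allIn allx yin; rewrite -ba ay (svalP y j) eqxx.
Qed.

Lemma main_ind (X : tower) (A : zmodType) (m : nat) (xs : seq (thread X)) :
  forall h : forall n, X n -> A, inG h -> hypP m h xs -> in_mH m h.
Proof.
elim: xs => [|x xs IH] h hG hyp.
  have [g [gG gP]] := base_lemma hG (fun n a nz => hyp n a nz erefl).
  exists g; split=> //; exists [::] => n; split; first by rewrite -gP subrr.
  by move=> t _; rewrite -gP subrr big_nil.
have hpt : forall n, h n (pt X n) = 0 by move=> n; exact: (proj1 ((proj1 hG) n)).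
case: (classic (exists y, List.In y xs /\ forall n, sval y n = sval x n)) => [[y [yin Ey]]|C1].
  apply: IH => // n a nz allx; apply: hyp => //=; rewrite allx andbT.
  by have := allIn allx yin; rewrite Ey.
case: (classic (forall n, sval x n = pt X n)) => [C2|C2].
  apply: IH => // n a nz allx; apply: hyp => //=; rewrite allx andbT C2.
  by apply/eqP => E; move: nz; rewrite E hpt eqxx.
have [n0 xn0] : exists n0, sval x n0 <> pt X n0.
  by apply: NNPP => H; apply: C2 => n; apply: NNPP => H'; apply: H; exists n.
have [N HN] : exists N, forall y, List.In y xs -> forall n, (N <= n)%N -> sval y n <> sval x n.
  apply: exN => y yin; apply: NNPP => H; apply: C1; exists y; split=> // n.
  by apply: NNPP => H'; apply: H; exists n.
pose N' := maxn N n0.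
pose c := h N' (sval x N').
pose h' := fun n t => h n t - tel x c n t.
have h'G : inG h' by apply: G_sub => //; apply: G_tel.
have xnpt : forall j, (n0 <= j)%N -> sval x j != pt X j.
  by move=> j le; apply/eqP => E; apply: xn0; apply: th_le_pt le E.
have hyp' : hypP m h' xs.
  move=> n a nz allx; rewrite /h' /tel in nz *.
  case: (boolP ((a != pt X n) && (a == sval x n))) => [/andP[ap /eqP ax]|na]; last first.
    rewrite (negbTE na) subr0 in nz *.
    apply: hyp => //=; rewrite allx andbT.
    apply: contra na => /eqP ax; rewrite ax eqxx andbT.
    by apply/eqP => E; move: nz; rewrite ax E hpt eqxx.
  subst a.
  pose M := minn n N'.
  have good : forall j, (M <= j)%N ->
      (sval x j != pt X j) && all (fun y : thread X => sval x j != sval y j) xs.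
    move=> j; rewrite geq_min => /orP[le|le].
      rewrite (_ : sval x j != pt X j); last first.
        by apply/eqP => E; move/eqP: ap; apply; apply: th_le_pt le E.
      apply: Inall => y yin; apply/eqP => E.
      by have := allIn allx yin; rewrite (th_le le (esym E)) eqxx.
    rewrite xnpt; last by apply: leq_trans le; apply: leq_maxr.
    apply: Inall => y yin; apply/eqP => E; apply: (HN y yin j) => //.
    by apply: leq_trans le; apply: leq_maxl.
  have ch := @chain X A m h x M (fun j le =>
     let: conj a b := andP (good j le) in step_lemma hG hyp a b).
  have := multB (ch n (geq_minl _ _)) (ch N' (geq_minr _ _)).
  rewrite opprB addrA subrK => H.
  by apply: H.
have [g [gG [ys Hys]]] := IH h' h'G hyp'.
exists g; split=> //; exists ((x, c) :: ys) => n.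
have [H1 H2] := Hys n.
split.
  by move: H1; rewrite /h' /tel eqxx subr0.
move=> t tn; rewrite big_cons /= -(H2 t tn) /h' /tel tn /=.
rewrite eq_sym; case: (boolP (t == sval x n)) => _.
  by rewrite (addrAC (h n t)) [c + _]addrC subrK.
by rewrite subr0.
Qed.

Theorem mainTheorem15 (X : tower) (A : zmodType) (m : nat) (hm : (2 <= m)%N)
  (h : forall n, X n -> A) (hG : inG h) (xs : seq (thread X))
  (hyp : forall n (a : X n), h n a != 0 ->
           all (fun x : thread X => a != sval x n) xs ->
           exists b : A, h n a = b *+ m) :
  in_mH m h.
Proof. exact: (main_ind hG hyp). Qed.
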